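(* Let $Q$ be a polynomial with $Q(0)=0$, let $\varepsilon>0$, let $N<\infty$, and let $\varphi$ be a function decreasing to zero at infinity. Then there exist an integer $M>N$ and a polynomial $P$ with $P(0)=0$ and $\deg P\le M$ such that $$\|P\|_{[-1,1]}\le\varepsilon$$ and $$|(Q+P)(t)|\le e^{-2M}\qquad\text{for all } |t|\le\varphi(M).$$
   Context: $\|P\|_{[-1,1]}=\max_{x\in[-1,1]}|P(x)|$. *)

(* Defs.v *)
From HB Require Import structures.
From mathcomp Require Import all_boot all_order all_algebra.
From mathcomp Require Import all_classical all_reals all_analysis.
Set Implicit Arguments. Unset Strict Implicit. Unset Printing Implicit Defensive.
Import Order.TTheory GRing.Theory Num.Theory.
Local Open Scope classical_set_scope.
Local Open Scope ring_scope.

(* ||P||_[-1,1] = max_{x in [-1,1]} |P(x)|, written as the supremum of the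
   (compact, nonempty, hence attained) image set. *)
Definition supnorm11 (R : realType) (P : {poly R}) : R :=
  sup [set `|P.[x]| | x in `[-1, 1]%classic].

(* Main.v *)
Require Import Defs.
From HB Require Import structures.
From mathcomp Require Import all_boot all_order all_algebra.
From mathcomp Require Import all_classical all_reals all_analysis.
Import Order.TTheory GRing.Theory Num.Theory.
Local Open Scope classical_set_scope.
Local Open Scope ring_scope.
From mathcomp Require Import ring lra zify.
Section S.
Context {R : realType}.

Definition Tm (N i : nat) (x : R) := (1 - x) ^+ (N - i) * x ^+ i *+ 'C(N, i).
Definition sfun (N j : nat) (x : R) :=
  \sum_(i < N.+1) (if (i <= j)%N then Tm N i x else 0).

Lemma Tm_ge0 N i x : 0 <= x <= 1 -> 0 <= Tm N i x.
Proof.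
case/andP=> x0 x1; rewrite /Tm mulrn_wge0 // mulr_ge0 // exprn_ge0 //.
by rewrite subr_ge0.
Qed.

Lemma sumTm N x : \sum_(i < N.+1) Tm N i x = 1.
Proof. by rewrite /Tm -exprDn subrK expr1n. Qed.

Lemma sfun_ge0 N j x : 0 <= x <= 1 -> 0 <= sfun N j x.
Proof.
move=> hx; apply: sumr_ge0 => i _; case: ifP => // _; exact: Tm_ge0.
Qed.

Lemma sfun_le1 N j x : 0 <= x <= 1 -> sfun N j x <= 1.
Proof.
move=> hx; rewrite -(sumTm N x); apply: ler_sum => i _.
by case: ifP => // _; exact: Tm_ge0.
Qed.

Lemma sum_binom N : \sum_(i < N.+1) (1 *+ 'C(N, i) : R) = 2 ^+ N.
Proof.
have -> : (2 : R) = 1 + 1 by [].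
rewrite exprDn; apply: eq_bigr => i _; by rewrite !expr1n mulr1.
Qed.

Lemma one_sub_sfun N j x : 0 <= x <= 1 -> 1 - sfun N j x <= x ^+ j.+1 * 2 ^+ N.
Proof.
move=> hx; case/andP: (hx) => x0 x1.
rewrite -sum_binom -{1}(sumTm N x) /sfun -sumrB mulr_sumr; apply: ler_sum => i _.
case: ifP => hij; first by rewrite subrr mulr_ge0 ?exprn_ge0 // mulrn_wge0.
rewrite subr0 /Tm mulrnAr lerMn2r; apply/orP; right.
rewrite -[X in _ <= X]mul1r ler_pM ?exprn_ge0 ?subr_ge0 ?exprn_ile1 ?subr_ge0 //.
  by rewrite lerBlDr lerDl.
by rewrite mulr1; apply: ler_wiXn2l => //; rewrite ltnNge hij.
Qed.

Lemma sfun_chernoff N j x : 0 <= x <= 1 -> sfun N j x <= 2 ^+ j * (1 - x / 2) ^+ N.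
Proof.
move=> hx; case/andP: (hx) => x0 x1.
have -> : 1 - x / 2 = (1 - x) + x / 2 by field.
rewrite (exprDn (1 - x)) mulr_sumr; apply: ler_sum => i _.
case: ifP => hij.
  have e : (2 : R) ^+ j = 2 ^+ (j - i) * 2 ^+ i by rewrite -exprD subnK.
  have h : 2 ^+ i * ((1 - x) ^+ (N - i) * (x / 2) ^+ i *+ 'C(N, i)) = Tm N i x.
    by rewrite /Tm -!mulrnAr mulrCA; congr (_ * _); rewrite mulrnAr -exprMn (mulrC 2) divfK.
  rewrite e -mulrA h -[X in X <= _]mul1r ler_pM ?Tm_ge0 //.
  by rewrite exprn_ege1 // ler1n.
rewrite mulr_ge0 ?exprn_ge0 // mulrn_wge0 // mulr_ge0 ?exprn_ge0 ?subr_ge0 //.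
by rewrite divr_ge0.
Qed.
Definition Sp (N j : nat) : {poly R} :=
  \sum_(i < N.+1) (if (i <= j)%N then
     (('C(N, i)%:R : R)%:P * ((1 - 'X^2) ^+ (N - i) * ('X^2) ^+ i)) else 0).

Lemma Sp_horner N j t : (Sp N j).[t] = sfun N j (t ^+ 2).
Proof.
rewrite /Sp /sfun horner_sum; apply: eq_bigr => i _; case: ifP => _; last by rewrite horner0.
by rewrite hornerCM hornerM !horner_exp hornerD hornerN hornerC hornerXn hornerX /Tm -mulr_natl mulr1 mulr_natl.
Qed.

Lemma size_Sp N j : (size (Sp N j) <= (N.*2).+1)%N.
Proof.
apply: leq_trans (size_sum _ _ _) _.
apply/bigmax_leqP => i _; case: ifP => _; first last.
  by rewrite size_poly0.
apply: leq_trans (size_polyMleq _ _) _.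
rewrite size_polyC.
apply: (@leq_trans (size ((1 - 'X^2) ^+ (N - i) * ('X^2) ^+ i : {poly R}))); first by case: (_ != 0) => /=; lia.
apply: leq_trans (size_polyMleq _ _) _.
have h1 : size (1 - 'X^2 : {poly R}) = 3%N.
  by rewrite -opprB size_polyN size_Xn_sub_1.
have hA := size_poly_exp_leq (1 - 'X^2 : {poly R}) (N - i).
have hB := size_poly_exp_leq ('X^2 : {poly R}) i.
rewrite h1 in hA; rewrite size_polyXn /= in hB.
apply: (@leq_trans ((2 * (N - i)).+1 + (2 * i).+1).-1).
  by rewrite -!subn1 leq_sub2r // (leq_add hA hB).
rewrite -addnn; have := ltn_ord i; lia.
Qed.
Definition Bp (p : {poly R}) : R := \sum_(i < size p) `|p`_i|.

Lemma Bp_ge0 p : 0 <= Bp p.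
Proof. by apply: sumr_ge0 => i _. Qed.

Lemma horner_Bp p t : `|t| <= 1 -> `|p.[t]| <= Bp p.
Proof.
move=> ht; rewrite horner_coef; apply: le_trans (ler_norm_sum _ _ _) _.
apply: ler_sum => i _; rewrite normrM normrX.
by rewrite -[X in _ <= X]mulr1 ler_wpM2l // exprn_ile1.
Qed.
End S.

Lemma nat_aux1 (q k jj : nat) : (jj <= q + (k.+1 * jj).*2)%N.
Proof. rewrite -addnn; lia. Qed.

Lemma nat_aux2 (q k j1 j2 : nat) : (j2 <= q + (k.+1 * maxn j1 j2).*2)%N.
Proof. rewrite -addnn; lia. Qed.

Lemma nat_aux3 (a b n : nat) : (b <= n.*2.+1)%N -> ((a + b).-1 <= (a + n.*2).+1)%N.
Proof. rewrite -!addnn; lia. Qed.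

Theorem mainTheorem7 (R : realType) (Q : {poly R}) (eps : R) (N : R)
    (phi : R -> R) :
  Q.[0] = 0 -> 0 < eps ->
  {homo phi : x y / x <= y >-> y <= x} ->
  phi x @[x --> +oo] --> 0 ->
  exists (M : nat) (P : {poly R}),
    [/\ N < M%:R, P.[0] = 0, (size P <= M.+1)%N,
        supnorm11 P <= eps &
        forall t : R, `|t| <= phi M%:R -> `|(Q + P).[t]| <= expR (- 2 * M%:R)].
Proof.
move=> hQ0 heps _ hphi.
have [R0 hR0] : exists R0 : {poly R}, Q = R0 * 'X.
  have /factor_theorem [q hq] : root Q 0 by apply/eqP.
  by exists q; rewrite hq polyC0 subr0.
set C := Bp R0 + 1.
have C0 : 0 < C by rewrite /C ltr_pwDr // Bp_ge0.
have hC : forall t, `|t| <= 1 -> `|Q.[t]| <= C * `|t|.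
  move=> t ht; rewrite hR0 hornerMX normrM ler_wpM2r //.
  by apply: le_trans (horner_Bp R0 t ht) _; rewrite /C lerDl.
have hC1 : forall t, `|t| <= 1 -> `|Q.[t]| <= C.
  move=> t ht; apply: le_trans (hC t ht) _.
  by rewrite -[X in _ <= X]mulr1 ler_wpM2l // ltW.
set eta := Num.min (eps / C) 1.
have eta0 : 0 < eta by rewrite /eta lt_min ltr01 andbT divr_gt0.
have eta1 : eta <= 1 by rewrite /eta ge_min lexx orbT.
have etaC : eta <= eps / C by rewrite /eta ge_min lexx.
set x0 := eta ^+ 2.
set c := 1 - x0 / 2.
have x00 : 0 < x0 by rewrite exprn_gt0.
have x01 : x0 <= 1 by rewrite exprn_ile1 // ltW.
have c0 : 0 <= c by rewrite /c subr_ge0; lra.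
have c1 : `|c| < 1 by rewrite ger0_norm // /c; lra.
have q4 : (0:R) < 1/4 by lra.
have [K0 _ hK0] := cvgr0_norm_lt _ (cvg_expr c1) _ q4.
set K := K0.+1.
have hK : c ^+ K <= 1/4.
  have := hK0 K (leqnSn K0); rewrite ger0_norm ?exprn_ge0 //; exact: ltW.
set a : R := expR (-2).
have a0 : 0 < a by rewrite expR_gt0.
set rho := Num.min 1 (Num.min ((a ^+ 2 / 2) ^+ K) (a ^+ (size Q) / C)).
have rho0 : 0 < rho.
  by rewrite /rho !lt_min ltr01 /= exprn_gt0 ?divr_gt0 ?exprn_gt0.
have rho1 : rho <= 1 by rewrite /rho ge_min lexx.
have rhoK : rho <= (a ^+ 2 / 2) ^+ K by rewrite /rho !ge_min lexx orbT.
have rhoC : rho <= a ^+ (size Q) / C by rewrite /rho !ge_min lexx !orbT.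
have [M0 [M0r hM0]] := cvgr0_norm_lt _ hphi _ rho0.
have half1 : `|1/2 : R| < 1 by rewrite ger0_norm; lra.
have epsC : 0 < eps / C by rewrite divr_gt0.
have [J1 _ hJ1] := cvgr0_norm_lt _ (cvg_expr half1) _ epsC.
set J2 := (Num.Def.trunc (Num.max N M0)).+1.
have hJ2 := truncnS_gt (Num.max N M0).
set j := maxn J1 J2.
set Nn := (K * j)%N.
set M := (size Q + Nn.*2)%N.
have jM : (j <= M)%N by apply: nat_aux1.
have NM : Num.max N M0 < M%:R.
  apply: lt_le_trans hJ2 _; rewrite ler_nat; apply: nat_aux2.
have hj : (1/2) ^+ j <= eps / C.
  have := hJ1 j (leq_maxl _ _); rewrite ger0_norm ?exprn_ge0 //; exact: ltW.
exists M, (- (Q * Sp Nn j)).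
have sqN : forall t : R, t ^+ 2 = `|t| ^+ 2 by move=> t; rewrite real_normK // num_real.
split.
- by apply: le_lt_trans NM; rewrite le_max lexx.
- by rewrite hornerN hornerM hQ0 mul0r oppr0.
- rewrite size_polyN; apply: leq_trans (size_polyMleq _ _) _.
  exact: nat_aux3 (size_Sp (R:=R) Nn j).
- rewrite /supnorm11; apply: ge_sup.
    exists `|(- (Q * Sp Nn j)).[0]|; exists 0 => //.
    by rewrite /= in_itv /=; apply/andP; split; lra.
  move=> y [t ht <-].
  have ht1 : `|t| <= 1.
    by move: ht; rewrite /= in_itv /= => /andP[h1 h2]; rewrite ler_norml h1 h2.
  have hx : 0 <= t ^+ 2 <= 1.
    by rewrite sqr_ge0 /= sqN exprn_ile1.
  rewrite hornerN normrN hornerM normrM Sp_horner (ger0_norm (sfun_ge0 _ _ _ hx)).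
  have hQt := hC1 t ht1.
  case: (lerP `|t| eta) => hte.
    apply: le_trans (ler_wpM2l (normr_ge0 _) (sfun_le1 _ _ _ hx)) _.
    rewrite mulr1; apply: le_trans (hC t ht1) _.
    apply: le_trans (ler_wpM2l (ltW C0) (le_trans hte etaC)) _.
    by rewrite mulrC divfK // gt_eqF.
  have hs : sfun Nn j (t ^+ 2) <= eps / C.
    apply: le_trans (sfun_chernoff _ _ _ hx) _.
    have h1 : (1 - t ^+ 2 / 2) ^+ Nn <= c ^+ Nn.
      apply: lerXn2r; rewrite ?nnegrE //.
        case/andP: hx => _ hx1; lra.
      rewrite /c lerD2l lerN2 ler_pM2r // /x0 (sqN t).
      by apply: lerXn2r; rewrite ?nnegrE // ltW.
    apply: le_trans (ler_wpM2l (exprn_ge0 _ _) h1) _; first by [].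
    rewrite /Nn exprM.
    have h2 : (c ^+ K) ^+ j <= (1/4) ^+ j.
      by apply: lerXn2r; rewrite ?nnegrE ?exprn_ge0 //; lra.
    apply: le_trans (ler_wpM2l (exprn_ge0 _ _) h2) _; first by [].
    rewrite -exprMn.
    have -> : (2 : R) * (1/4) = 1/2 by field.
    exact: hj.
  apply: le_trans (ler_pM (normr_ge0 _) (sfun_ge0 _ _ _ hx) hQt hs) _.
  by rewrite mulrC divfK // gt_eqF.
- move=> t ht.
  have M0M : M0 < M%:R by apply: le_lt_trans NM; rewrite le_max lexx orbT.
  have hphiM := hM0 _ M0M.
  have htr : `|t| <= rho.
    by apply: le_trans ht _; apply: le_trans (ler_norm _) _; apply: ltW.
  have ht1 : `|t| <= 1 by apply: le_trans htr rho1.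
  have hx : 0 <= t ^+ 2 <= 1.
    by rewrite sqr_ge0 /= sqN exprn_ile1.
  have hxr : t ^+ 2 <= rho.
    by rewrite sqN; apply: le_trans htr; apply: ler_iXnr.
  have hs1 : 0 <= 1 - sfun Nn j (t ^+ 2) by rewrite subr_ge0 sfun_le1.
  rewrite hornerD hornerN hornerM Sp_horner -{1}[Q.[t]]mulr1 -mulrBr normrM.
  rewrite (ger0_norm hs1).
  apply: le_trans (ler_pM (normr_ge0 _) hs1 (hC1 t ht1) (one_sub_sfun _ _ _ hx)) _.
  have h1 : (t ^+ 2) ^+ j.+1 <= rho ^+ j.+1.
    by apply: lerXn2r; rewrite ?nnegrE ?sqr_ge0 // ltW.
  apply: le_trans (ler_wpM2l (ltW C0) (ler_wpM2r (exprn_ge0 _ _) h1)) _.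
    by [].
  rewrite exprSr.
  have -> : C * (rho ^+ j * rho * 2 ^+ Nn) = (C * rho) * (rho ^+ j * 2 ^+ Nn) by ring.
  have h2 : C * rho <= a ^+ size Q.
    apply: le_trans (ler_wpM2l (ltW C0) rhoC) _.
    by rewrite mulrC divfK // gt_eqF.
  have h3 : rho ^+ j * 2 ^+ Nn <= a ^+ Nn.*2.
    have h4 : rho ^+ j <= ((a ^+ 2 / 2) ^+ K) ^+ j.
      by apply: lerXn2r; rewrite ?nnegrE ?exprn_ge0 ?divr_ge0 ?exprn_ge0 // ltW.
    apply: le_trans (ler_wpM2r (exprn_ge0 _ _) h4) _; first by [].
    rewrite -exprM -/Nn -exprMn divfK // -exprM.
    by rewrite -muln2 mulnC.
  apply: le_trans (ler_pM _ _ h2 h3) _.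
      by rewrite mulr_ge0 // ltW.
    by rewrite mulr_ge0 ?exprn_ge0 // ltW.
  rewrite -exprD (mulrC (-2)) expRM_natl.
  by [].
Qed.
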